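(* Let $\Lambda=kS_{(r,s)}/I$ be a quadratic monomial algebra on an $(r,s)$-star quiver with $\operatorname{Ext}^1_{\Lambda^e}(\Lambda,\Lambda^e)=0$. If $s\geq2$ and $a$ is an arrow with $h(a)=z$, then $|\mathcal Z_a|\leq s-1$. If $r\geq 2$ and $b$ is an arrow with $t(b)=z$, then $|\mathcal Z_b|\leq r-1$.
   Context: The $(r,s)$-star quiver $S_{(r,s)}$: central vertex $z$, $r$ arrows $a_i:i\to z$ from distinct vertices and $s$ arrows $b_j:z\to j$ to distinct vertices, nothing else. Quadratic monomial: $I$ admissible generated by paths of length $2$. For $a$ with $h(a)=z$, $\mathcal Z_a=\{b:z\to j\mid ba=0\}$; for $b$ with $t(b)=z$, $\mathcal Z_b=\{a:i\to z\mid ba=0\}$. $\Lambda^e=\Lambda\otimes_k\Lambda^{\mathrm{op}}$. *)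

(* Defs.v *)
From HB Require Import structures.
From mathcomp Require Import all_boot all_order all_algebra.
Set Implicit Arguments. Unset Strict Implicit. Unset Printing Implicit Defensive.
Import GRing.Theory.
Local Open Scope ring_scope.

(* The (r,s)-star quiver S_(r,s): central vertex z, sources i : 'I_r with
   arrows a_i : i -> z, targets j : 'I_s with arrows b_j : z -> j.
   A quadratic monomial ideal I is given by the set R of pairs (i,j) with
   b_j a_i \in I (every such set generates an admissible ideal, as J^3 = 0).
   Lambda = kS/I has the k-basis: vertices, arrows, and the paths b_j a_i
   with (i,j) \notin R. *)

Section StarAlgebra.
Variables (k : fieldType) (r s : nat) (R : {set 'I_r * 'I_s}).

(* vertices: None = z, Some (inl i) = source i, Some (inr j) = target j *)
Definition Vtx := option ('I_r + 'I_s).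
(* arrows: inl i = a_i, inr j = b_j *)
Definition Arr := ('I_r + 'I_s)%type.
Definition Path2 := {p : 'I_r * 'I_s | p \notin R}.
Definition Basis := ((Vtx + Arr) + Path2)%type.

Definition bhead (p : Basis) : Vtx :=
  match p with
  | inl (inl v) => v
  | inl (inr (inl i)) => None
  | inl (inr (inr j)) => Some (inr j)
  | inr q => Some (inr (val q).2)
  end.

Definition btail (p : Basis) : Vtx :=
  match p with
  | inl (inl v) => v
  | inl (inr (inl i)) => Some (inl i)
  | inl (inr (inr j)) => None
  | inr q => Some (inl (val q).1)
  end.

(* product p * q of basis elements = "q followed by p" (as in b a),
   None meaning zero *)
Definition bprod (p q : Basis) : option Basis :=
  if btail p != bhead q then None else
  match p, q with
  | inl (inl _), _ => Some q
  | _, inl (inl _) => Some p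
  | inl (inr (inr j)), inl (inr (inl i)) =>
      omap (fun x : Path2 => inr x) (insub (i, j))
  | _, _ => None
  end.

Local Notation Lam := {ffun Basis -> k^o}.
(* Lambda^e = Lambda (x)_k Lambda^op, as coefficient vectors on basis pairs *)
Local Notation Ten := {ffun (Basis * Basis) -> k^o}.

Definition lmul (x y : Lam) : Lam :=
  [ffun c => \sum_(p : Basis) \sum_(q : Basis)
     (if bprod p q == Some c then x p * y q else 0)].

(* outer bimodule structure of Lambda^e: x . (u (x) v) . y = xu (x) vy *)
Definition tlact (x : Lam) (t : Ten) : Ten :=
  [ffun c => \sum_(p : Basis) \sum_(q : Basis)
     (if bprod p q == Some c.1 then x p * t (q, c.2) else 0)].
Definition tract (t : Ten) (y : Lam) : Ten :=
  [ffun c => \sum_(p : Basis) \sum_(q : Basis)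
     (if bprod p q == Some c.2 then t (c.1, p) * y q else 0)].

Definition is_derivation (d : Lam -> Ten) : Prop :=
  (forall (a : k) (x y : Lam), d (a *: x + y) = a *: d x + d y) /\
  (forall x y : Lam, d (lmul x y) = tlact x (d y) + tract (d x) y).

Definition is_inner (d : Lam -> Ten) : Prop :=
  exists m : Ten, forall x : Lam, d x = tlact x m - tract m x.

(* Ext^1_{Lambda^e}(Lambda, Lambda^e) = HH^1(Lambda, Lambda^e)
   = Der(Lambda, Lambda^e) / Inn(Lambda, Lambda^e) vanishes *)
Definition Ext1_vanishes : Prop :=
  forall d : Lam -> Ten, is_derivation d -> is_inner d.

Definition Za (i : 'I_r) : {set 'I_s} := [set j | (i, j) \in R].
Definition Zb (j : 'I_s) : {set 'I_r} := [set i | (i, j) \in R].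

End StarAlgebra.

(* Main.v *)
Require Import Defs.
From mathcomp Require Import all_boot all_order all_algebra.
Set Implicit Arguments. Unset Strict Implicit. Unset Printing Implicit Defensive.
Import GRing.Theory.
Local Open Scope ring_scope.

Section S.
Variables (k : fieldType) (r s : nat) (R : {set 'I_r * 'I_s}).
Local Notation B := (Basis R).
Definition vz : B := inl (inl None).
Definition vs i : B := inl (inl (Some (inl i))).
Definition vt j : B := inl (inl (Some (inr j))).
Definition aa i : B := inl (inr (inl i)).
Definition bb j : B := inl (inr (inr j)).

Lemma dsum1 (F : B -> B -> k^o) p0 q0 :
  (forall p q, (p, q) != (p0, q0) -> F p q = 0) ->
  \sum_(p : B) \sum_(q : B) F p q = F p0 q0.
Proof.
move=> H; rewrite pair_big /= (bigD1 (p0, q0)) //= big1 ?addr0 //.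
by move=> [p q] /= /H.
Qed.

Lemma dsum2 (F : B -> B -> k^o) p0 q0 p1 q1 : (p0, q0) != (p1, q1) ->
  (forall p q, (p, q) != (p0, q0) -> (p, q) != (p1, q1) -> F p q = 0) ->
  \sum_(p : B) \sum_(q : B) F p q = F p0 q0 + F p1 q1.
Proof.
move=> N H; rewrite pair_big /= (bigD1 (p0, q0)) //= (bigD1 (p1, q1)) /=; last first.
  by rewrite eq_sym N.
rewrite big1 ?addr0 //.
by move=> [p q] /= /andP [] ? ?; apply: H.
Qed.

Lemma dsum0 (F : B -> B -> k^o) :
  (forall p q, F p q = 0) -> \sum_(p : B) \sum_(q : B) F p q = 0.
Proof. by move=> H; rewrite big1 // => p _; rewrite big1. Qed.

Lemma A1 i : (forall j, (i, j) \in R) -> forall p, p != vz -> bprod p (aa i) = None.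
Proof.
move=> Hi [[[[i0|j0]|]|[i0|j0]]|pp] //=.
rewrite /bprod /= insubF //= Hi //.
Qed.

Lemma A1' i : bprod vz (aa i) = Some (aa i).
Proof. by []. Qed.

Lemma A2 i : forall q, q != vs i -> bprod (vs i) q = None.
Proof.
move=> [[[[i0|j0]|]|[i0|j0]]|pp] //= H; rewrite /bprod /=.
by case: eqP => // -[] E; rewrite E eqxx in H.
Qed.

Lemma A2' i : bprod (vs i) (vs i) = Some (vs i).
Proof. by rewrite /bprod /= eqxx. Qed.

Lemma A3 i p q : bprod p q = Some (aa i) ->
  (p, q) = (vz, aa i) \/ (p, q) = (aa i, vs i).
Proof.
case: p => [[[[i0|j0]|]|[i0|j0]]|pp]; case: q => [[[[i1|j1]|]|[i1|j1]]|qq];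
  rewrite /bprod /=; try (case: eqP => //=); try by [].
- by move=> [->]; left.
- by move=> [->] [->]; right.
- by case: insubP.
Qed.

Lemma A4 i i' : i != i' -> forall q, bprod (aa i') q != Some (aa i).
Proof.
move=> N q; apply/eqP => /A3 [[E1 E2]|[E1 E2]] //.
by move: N; rewrite E1 eqxx.
Qed.

Lemma A5 i' : forall p, bprod p (aa i') != Some (vs i').
Proof.
move=> [[[[i0|j0]|]|[i0|j0]]|pp]; rewrite /bprod /=; try (case: eqP => //=); try by [].
by case: insubP.
Qed.


Definition dA i i' (x : {ffun B -> k^o}) : {ffun (B * B) -> k^o} :=
  [ffun c => x (aa i') * (if c == (aa i, vs i') then 1 else 0)].

Lemma aa_aa i : bprod (aa i) (vs i) = Some (aa i).
Proof. by rewrite /bprod /= eqxx. Qed.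

Lemma dA_der i i' : (forall j, (i,j) \in R) -> i != i' -> is_derivation (dA i i').
Proof.
move=> Hi N; split.
  move=> a x y; apply/ffunP => c; rewrite !ffunE.
  by rewrite mulrDl -scalerAl.
move=> x y; apply/ffunP => -[c1 c2]; rewrite !ffunE /=.
rewrite (dsum2 (p0:=vz) (q0:=aa i') (p1:=aa i') (q1:=vs i')); last 2 first.
- by [].
- move=> p q H1 H2; case: eqP => // /A3 [] E.
    by rewrite E eqxx in H1.
  by rewrite E eqxx in H2.
rewrite (dsum1 (p0:=vz) (q0:=aa i)); last first.
  move=> p q H; rewrite ffunE /=; case: (eqVneq q (aa i)) => [Eq|Nq].
    subst q; rewrite A1 //; apply: contra H => /eqP ->; by [].
  by rewrite xpair_eqE (negbTE Nq) /= !mulr0 if_same.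
rewrite (dsum1 (p0:=vs i') (q0:=vs i')); last first.
  move=> p q H; rewrite ffunE /=; case: (eqVneq p (vs i')) => [Ep|Np].
    subst p; rewrite A2 //; apply: contra H => /eqP ->; by [].
  by rewrite xpair_eqE (negbTE Np) andbF /= mulr0 mul0r if_same.
rewrite !ffunE !A1' A2' aa_aa !eqxx /= !xpair_eqE !(inj_eq Some_inj).
case: (eqVneq c1 (aa i)) => [E1|n1]; case: (eqVneq c2 (vs i')) => [E2|n2];
  try subst c1; try subst c2; rewrite ?eqxx /= ?mulr1 ?mulr0 ?mul0r ?addr0 ?add0r ?mulrA //.
Qed.

Definition delta (b : B) : {ffun B -> k^o} := [ffun p => if p == b then 1 else 0].

Lemma dA_not_inner i i' : i != i' -> ~ is_inner (dA i i').
Proof.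
move=> N [m Hm].
have := Hm (delta (aa i')); move/ffunP/(_ (aa i, vs i')).
have E1 : tlact (delta (aa i')) m (aa i, vs i') = 0.
  rewrite ffunE; apply: dsum0 => p q /=; rewrite ffunE.
  case: eqP => // Ep; case: (eqVneq p (aa i')) => [Ep'|Np].
    by subst p; move: (A4 N q); rewrite Ep eqxx.
  by rewrite mul0r.
have E2 : tract m (delta (aa i')) (aa i, vs i') = 0.
  rewrite ffunE; apply: dsum0 => p q /=; rewrite ffunE.
  case: eqP => // Ep; case: (eqVneq q (aa i')) => [Eq'|Nq].
    by subst q; move: (A5 i' p); rewrite Ep eqxx.
  by rewrite mulr0.
rewrite /= [in X in _ = X]ffunE E1 [in X in _ = X]ffunE E2 oppr0 addr0 !ffunE !eqxx mulr1.
by move/eqP; rewrite oner_eq0.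
Qed.

Lemma B1 j : forall p, p != vt j -> bprod p (vt j) = None.
Proof.
move=> [[[[i0|j0]|]|[i0|j0]]|pp] //= H; rewrite /bprod /=.
by case: eqP => // -[] E; rewrite E eqxx in H.
Qed.

Lemma B1' j : bprod (vt j) (vt j) = Some (vt j).
Proof. by rewrite /bprod /= eqxx. Qed.

Lemma B2 j : (forall i, (i, j) \in R) -> forall q, q != vz -> bprod (bb j) q = None.
Proof.
move=> Hj [[[[i0|j0]|]|[i0|j0]]|pp] //=.
rewrite /bprod /= insubF //= Hj //.
Qed.

Lemma B2' j : bprod (bb j) vz = Some (bb j).
Proof. by []. Qed.

Lemma bb_vt j : bprod (vt j) (bb j) = Some (bb j).
Proof. by rewrite /bprod /= eqxx. Qed.

Lemma B3 j p q : bprod p q = Some (bb j) ->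
  (p, q) = (bb j, vz) \/ (p, q) = (vt j, bb j).
Proof.
case: p => [[[[i0|j0]|]|[i0|j0]]|pp]; case: q => [[[[i1|j1]|]|[i1|j1]]|qq];
  rewrite /bprod /=; try (case: eqP => //=); try by [].
- by move=> [->] [->]; right.
- by move=> [->]; left.
- by case: insubP.
Qed.

Lemma B4 j' : forall q, bprod (bb j') q != Some (vt j').
Proof.
move=> q; apply/eqP.
case: q => [[[[i1|j1]|]|[i1|j1]]|qq]; rewrite /bprod /=; try (case: eqP => //=); try by [].
by case: insubP.
Qed.

Lemma B5 j j' : j != j' -> forall p, bprod p (bb j') != Some (bb j).
Proof.
move=> N p; apply/eqP => /B3 [[E1 E2]|[E1 E2]] //.
by move: N; rewrite E2 eqxx.
Qed.

Definition dB j j' (x : {ffun B -> k^o}) : {ffun (B * B) -> k^o} :=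
  [ffun c => x (bb j') * (if c == (vt j', bb j) then 1 else 0)].

Lemma dB_der j j' : (forall i, (i,j) \in R) -> j != j' -> is_derivation (dB j j').
Proof.
move=> Hj N; split.
  move=> a x y; apply/ffunP => c; rewrite !ffunE.
  by rewrite mulrDl -scalerAl.
move=> x y; apply/ffunP => -[c1 c2]; rewrite !ffunE /=.
rewrite (dsum2 (p0:=bb j') (q0:=vz) (p1:=vt j') (q1:=bb j')); last 2 first.
- by [].
- move=> p q H1 H2; case: eqP => // /B3 [] E.
    by rewrite E eqxx in H1.
  by rewrite E eqxx in H2.
rewrite (dsum1 (p0:=vt j') (q0:=vt j')); last first.
  move=> p q H; rewrite ffunE /=; case: (eqVneq q (vt j')) => [Eq|Nq].
    subst q; rewrite B1 //; apply: contra H => /eqP ->; by [].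
  by rewrite xpair_eqE (negbTE Nq) /= !mulr0 if_same.
rewrite (dsum1 (p0:=bb j) (q0:=vz)); last first.
  move=> p q H; rewrite ffunE /=; case: (eqVneq p (bb j)) => [Ep|Np].
    subst p; rewrite B2 //; apply: contra H => /eqP ->; by [].
  by rewrite xpair_eqE (negbTE Np) andbF /= mulr0 mul0r if_same.
rewrite !ffunE B1' !B2' bb_vt !eqxx /= !xpair_eqE !(inj_eq Some_inj).
case: (eqVneq c1 (vt j')) => [E1|n1]; case: (eqVneq c2 (bb j)) => [E2|n2];
  try subst c1; try subst c2; rewrite ?eqxx /= ?mulr1 ?mulr0 ?mul0r ?addr0 ?add0r ?mulrA //.
by rewrite addrC.
Qed.

Lemma dB_not_inner j j' : j != j' -> ~ is_inner (dB j j').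
Proof.
move=> N [m Hm].
have := Hm (delta (bb j')); move/ffunP/(_ (vt j', bb j)).
have E1 : tlact (delta (bb j')) m (vt j', bb j) = 0.
  rewrite ffunE; apply: dsum0 => p q /=; rewrite ffunE.
  case: eqP => // Ep; case: (eqVneq p (bb j')) => [Ep'|Np].
    by subst p; move: (B4 j' q); rewrite Ep eqxx.
  by rewrite mul0r.
have E2 : tract m (delta (bb j')) (vt j', bb j) = 0.
  rewrite ffunE; apply: dsum0 => p q /=; rewrite ffunE.
  case: eqP => // Ep; case: (eqVneq q (bb j')) => [Eq'|Nq].
    by subst q; move: (B5 N p); rewrite Ep eqxx.
  by rewrite mulr0.
rewrite /= [in X in _ = X]ffunE E1 [in X in _ = X]ffunE E2 oppr0 addr0 !ffunE !eqxx mulr1.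
by move/eqP; rewrite oner_eq0.
Qed.

End S.

Lemma notExtA (k : fieldType) (r s : nat) (R : {set 'I_r * 'I_s}) i i' :
  (forall j, (i, j) \in R) -> i != i' -> ~ Ext1_vanishes k R.
Proof. by move=> Hi N H; apply: (dA_not_inner N); apply: H; apply: dA_der. Qed.

Lemma notExtB (k : fieldType) (r s : nat) (R : {set 'I_r * 'I_s}) j j' :
  (forall i, (i, j) \in R) -> j != j' -> ~ Ext1_vanishes k R.
Proof. by move=> Hj N H; apply: (dB_not_inner N); apply: H; apply: dB_der. Qed.

From mathcomp Require Import zify.

Lemma ord_le1 n (h : (n <= 1)%N) (a b : 'I_n) : a = b.
Proof. apply: ord_inj; have := ltn_ord a; have := ltn_ord b; lia. Qed.

Lemma other n (h : (1 < n)%N) (i : 'I_n) : exists i' : 'I_n, i != i'.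
Proof.
have h0 : (0 < n)%N by lia.
case: (eqVneq (val i) 0%N) => E.
  exists (Ordinal h); apply/eqP => /(congr1 val) /=; rewrite E. by [].
exists (Ordinal h0); apply/eqP => /(congr1 val) /=; by apply/eqP.
Qed.

Lemma fullZa r s (R : {set 'I_r * 'I_s}) i :
  (s - 1 < #|Za R i|)%N -> forall j, (i, j) \in R.
Proof.
move=> H j.
have E : Za R i = setT.
  apply/eqP; rewrite eqEcard subsetT cardsT card_ord; lia.
by have := in_setT j; rewrite -E inE.
Qed.

Lemma fullZb r s (R : {set 'I_r * 'I_s}) j :
  (r - 1 < #|Zb R j|)%N -> forall i, (i, j) \in R.
Proof.
move=> H i.
have E : Zb R j = setT.
  apply/eqP; rewrite eqEcard subsetT cardsT card_ord; lia.
by have := in_setT i; rewrite -E inE.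
Qed.

Theorem mainTheorem16 (k : fieldType) (r s : nat) (R : {set 'I_r * 'I_s}) :
  Ext1_vanishes k R ->
  ((1 < s)%N -> forall i : 'I_r, (#|Za R i| <= s - 1)%N) /\
  ((1 < r)%N -> forall j : 'I_s, (#|Zb R j| <= r - 1)%N).
Proof.
move=> Hext; split.
  move=> hs i; rewrite leqNgt; apply/negP => /fullZa F.
  case: (ltnP 1 r) => hr.
    have [i' N] := other hr i; exact: (notExtA F N Hext).
  have h0 : (0 < s)%N by lia.
  have [j1 N] := other hs (Ordinal h0).
  apply: (@notExtB k r s R (Ordinal h0) j1 _ N Hext) => i0.
  by rewrite (ord_le1 hr i0 i).
move=> hr j; rewrite leqNgt; apply/negP => /fullZb F.
case: (ltnP 1 s) => hs.
  have [j' N] := other hs j; exact: (notExtB F N Hext).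
have h0 : (0 < r)%N by lia.
have [i1 N] := other hr (Ordinal h0).
apply: (@notExtA k r s R (Ordinal h0) i1 _ N Hext) => j0.
by rewrite (ord_le1 hs j0 j).
Qed.
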